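(* Let $J:[0,\infty)\to\mathbb R$ be a concave, nondecreasing function with $J(0)=0$. Let $r\in(0,2)$ and $A,B>0$, and suppose $z>0$ satisfies $z^2\le A^2+B^2J(z^r)$. Then $$J(z)\le C\,J(A)\Bigl[1+J(A^r)\Bigl(\frac BA\Bigr)^2\Bigr]^{1/(2-r)},$$ where $C$ is a constant depending only on $r$. *)

(* Defs.v *)
From Stdlib Require Import Reals.
Open Scope R_scope.

Definition concave_on_nonneg (J : R -> R) : Prop :=
  forall x y t, 0 <= x -> 0 <= y -> 0 <= t <= 1 ->
    t * J x + (1 - t) * J y <= J (t * x + (1 - t) * y).

Definition nondecreasing_on_nonneg (J : R -> R) : Prop :=
  forall x y, 0 <= x -> x <= y -> J x <= J y.

(* Main.v *)
Require Import Defs.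
From Stdlib Require Import Reals Lra.
Open Scope R_scope.

Lemma J_scale (J : R -> R) (x l : R) :
  concave_on_nonneg J -> J 0 = 0 -> 0 <= x -> 1 <= l -> J (l * x) <= l * J x.
Proof.
  intros Hc H0 Hx Hl.
  assert (H := Hc (l * x) 0 (/ l) ltac:(nra) ltac:(lra)
     ltac:(split; [apply Rlt_le, Rinv_0_lt_compat; lra|
                   rewrite <- Rinv_1; apply Rinv_le_contravar; lra])).
  rewrite H0 in H.
  replace (/ l * (l * x) + (1 - / l) * 0) with x in H by (field; lra).
  assert (0 < l) by lra.
  apply Rmult_le_reg_l with (/ l). apply Rinv_0_lt_compat; lra.
  replace (/ l * (l * J x)) with (J x) by (field; lra). lra.
Qed.

Lemma exp_le_inv' a b : exp a <= exp b -> a <= b.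
Proof.
  intros H. destruct (Rle_or_lt a b) as [h|h]; auto.
  apply exp_increasing in h. lra.
Qed.

Theorem lemma2p2 (r : R) (hr : 0 < r < 2) :
  exists C : R,
    forall (J : R -> R) (A B z : R),
      concave_on_nonneg J -> nondecreasing_on_nonneg J -> J 0 = 0 ->
      0 < A -> 0 < B -> 0 < z ->
      z ^ 2 <= A ^ 2 + B ^ 2 * J (Rpower z r) ->
      J z <= C * J A * Rpower (1 + J (Rpower A r) * (B / A) ^ 2) (1 / (2 - r)).
Proof.
  destruct hr as [hr1 hr2]. exists 1. intros J A B z Hc Hm H0 HA HB Hz Hineq.
  set (K := J (Rpower A r) * (B / A) ^ 2).
  assert (HJA : 0 <= J A) by (rewrite <- H0; apply Hm; lra).
  assert (HAr : 0 < Rpower A r) by (unfold Rpower; apply exp_pos).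
  assert (HJAr : 0 <= J (Rpower A r)) by (rewrite <- H0; apply Hm; lra).
  assert (HK : 0 <= K) by (unfold K; apply Rmult_le_pos; [lra| apply pow2_ge_0]).
  assert (HlnK : 0 <= ln (1 + K)).
  { destruct (Req_dec K 0) as [e|e]. rewrite e, Rplus_0_r, ln_1; lra.
    left. rewrite <- ln_1. apply ln_increasing; lra. }
  assert (Hp : 0 < 1 / (2 - r)) by (apply Rdiv_lt_0_compat; lra).
  assert (HP : 1 <= Rpower (1 + K) (1 / (2 - r))).
  { unfold Rpower. apply Rle_trans with (exp 0); [rewrite exp_0; lra|]. destruct (Req_dec (1/(2-r) * ln (1+K)) 0) as [e|e].
    rewrite e; lra. left. apply exp_increasing. nra. }
  destruct (Rle_or_lt z A) as [hz|hz].
  { assert (J z <= J A) by (apply Hm; lra). nra. }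
  set (t := z / A).
  assert (Ht : 1 < t) by (unfold t; apply Rmult_lt_reg_r with A; [lra|];
     unfold Rdiv; rewrite Rmult_assoc, Rinv_l; lra).
  assert (Hzt : z = t * A) by (unfold t; field; lra).
  assert (HLt : 0 < ln t) by (rewrite <- ln_1; apply ln_increasing; lra).
  assert (Htr : 1 <= Rpower t r).
  { unfold Rpower. apply Rle_trans with (exp 0); [rewrite exp_0; lra|]. left. apply exp_increasing. nra. }
  assert (Hzr : Rpower z r = Rpower t r * Rpower A r)
    by (rewrite Hzt; symmetry; apply Rpower_mult_distr; lra).
  assert (H1 : J (Rpower z r) <= Rpower t r * J (Rpower A r))
    by (rewrite Hzr; apply J_scale; auto; lra).
  assert (H2 : J z <= t * J A) by (rewrite Hzt; apply J_scale; auto; lra).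
  assert (H3 : t ^ 2 <= 1 + Rpower t r * K).
  { apply Rmult_le_reg_r with (A ^ 2). nra.
    replace (t ^ 2 * A ^ 2) with (z ^ 2) by (rewrite Hzt; ring).
    unfold K. replace ((1 + Rpower t r * (J (Rpower A r) * (B / A) ^ 2)) * A ^ 2)
      with (A ^ 2 + B ^ 2 * (Rpower t r * J (Rpower A r))) by (field; lra).
    assert (0 <= B^2) by apply pow2_ge_0. nra. }
  assert (H4 : t ^ 2 <= Rpower t r * (1 + K)) by nra.
  assert (H5 : exp (2 * ln t) <= exp (r * ln t + ln (1 + K))).
  { rewrite exp_plus, exp_ln by lra. replace (exp (2 * ln t)) with (t ^ 2).
    exact H4. rewrite <- Rpower_pow by lra. reflexivity. }
  apply exp_le_inv' in H5.
  assert (H6 : ln t <= 1 / (2 - r) * ln (1 + K)).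
  { apply Rmult_le_reg_l with (2 - r). lra.
    replace ((2 - r) * (1 / (2 - r) * ln (1 + K))) with (ln (1 + K)) by (field; lra). lra. }
  assert (H7 : t <= Rpower (1 + K) (1 / (2 - r))).
  { unfold Rpower. rewrite <- (exp_ln t) by lra. destruct H6 as [h|h].
    left; apply exp_increasing; exact h. rewrite h; lra. }
  nra.
Qed.
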